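(* For $i=1,\dots,n$ ($n\ge 2$) let $X_i$ be a finite set with $|X_i|=m_i$ and let $P_i$ be an irreducible stochastic matrix on $X_i$ in detailed balance with a strictly positive probability measure $\pi_i$, where $P_i$ is symmetric (i.e. $\pi_i$ is uniform) for every $i\ge 2$. Let $p^0_1,\dots,p^0_n>0$ sum to $1$ and let $$P=\sum_{i=1}^np^0_i\,(I_1\otimes\cdots\otimes I_{i-1}\otimes P_i\otimes J_{i+1}\otimes\cdots\otimes J_n)$$ (the nested product). For each $i$ let $L(X_i)=\bigoplus_{k=0}^{r_i}W^i_k$ be the eigenspace decomposition of $P_i$, with $W^i_k$ of eigenvalue $\lambda^i_k$, $\lambda^i_0=1$ and $W^i_0$ the constants. Then each of the following subspaces of $L(X_1\times\cdots\times X_n)\cong L(X_1)\otimes\cdots\otimes L(X_n)$ consists of eigenvectors of $P$ with the stated eigenvalue, and $L(X_1\times\cdots\times X_n)$ is their direct sum: (i) $L(X_1)\otimes\cdots\otimes L(X_{n-1})\otimes W^n_{k_n}$, $k_n=1,\dots,r_n$, with eigenvalue $p^0_n\lambda^n_{k_n}$ and dimension $m_1\cdots m_{n-1}\dim W^n_{k_n}$; (ii) $L(X_1)\otimes\cdots\otimes L(X_j)\otimes W^{j+1}_{k_{j+1}}\otimes W^{j+2}_0\otimes\cdots\otimes W^n_0$, for $j=1,\dots,n-2$ and $k_{j+1}=1,\dots,r_{j+1}$, with eigenvalue $p^0_{j+1}\lambda^{j+1}_{k_{j+1}}+p^0_{j+2}+\cdots+p^0_n$ and dimension $m_1\cdots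 m_j\dim W^{j+1}_{k_{j+1}}$; (iii) $W^1_{k_1}\otimes W^2_0\otimes\cdots\otimes W^n_0$, for $k_1=0,1,\dots,r_1$, with eigenvalue $p^0_1\lambda^1_{k_1}+p^0_2+\cdots+p^0_n$ and dimension $\dim W^1_{k_1}$.
   Context: $I_i$ is the identity matrix on $X_i$ and $J_i$ the $m_i\times m_i$ matrix with all entries $1/m_i$; explicitly $p(x,y)=\sum_{i=1}^np^0_i(\prod_{j<i}\delta(x_j,y_j))p_i(x_i,y_i)/\prod_{j>i}m_j$. Operators act on functions by $(Pf)(x)=\sum_yp(x,y)f(y)$; $(f_1\otimes\cdots\otimes f_n)(x)=\prod_if_i(x_i)$. Detailed balance: $\pi_i(x)p_i(x,y)=\pi_i(y)p_i(y,x)$. *)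

(* Defs.v *)
From HB Require Import structures.
From mathcomp Require Import all_boot all_order all_algebra.
Set Implicit Arguments. Unset Strict Implicit. Unset Printing Implicit Defensive.
Import Order.TTheory GRing.Theory Num.Theory.
Local Open Scope ring_scope.

Section Defs.
Variable R : realFieldType.

Definition L (X : finType) := {ffun X -> R^o}.

Definition kop (X : finType) (p : X -> X -> R) (f : L X) : L X :=
  [ffun x => \sum_y p x y * f y].

Definition kopE (X : finType) (p : X -> X -> R) : 'End(L X) := linfun (kop p).

Definition eigsp (X : finType) (p : X -> X -> R) (a : R) : {vspace L X} :=
  passmx.leigenspace (kopE p) a.

Definition stochastic (X : finType) (p : X -> X -> R) :=
  (forall x y, 0 <= p x y) /\ (forall x, \sum_y p x y = 1).

Definition irreducible (X : finType) (p : X -> X -> R) :=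
  forall x y, connect [rel a b | 0 < p a b] x y.

Definition reversible_pos (X : finType) (p : X -> X -> R) :=
  exists pi : X -> R, (forall x, 0 < pi x) /\ (\sum_x pi x = 1) /\
    (forall x y, pi x * p x y = pi y * p y x).

Definition symmetric_kernel (X : finType) (p : X -> X -> R) :=
  forall x y, p x y = p y x.

Variables (n : nat) (X : 'I_n -> finType).

Definition prodX := {dffun forall i : 'I_n, X i}.

Definition tens (f : forall i, L (X i)) : L prodX :=
  [ffun x : prodX => \prod_i f i (x i)].

(* tensor product V_1 (x) ... (x) V_n of subspaces: span of the pure tensors
   built from bases of the V_i *)
Definition tensv (V : forall i, {vspace L (X i)}) : {vspace L prodX} :=
  <<[seq tens (fun i => tnth (vbasis (V i)) (s i))
     | s : {dffun forall i : 'I_n, 'I_(\dim (V i))}]>>%VS.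

Definition nested_kernel (p0 : 'I_n -> R) (p : forall i, X i -> X i -> R)
  (x y : prodX) : R :=
  \sum_i p0 i * (\prod_(j < n | (j < i)%N) (x j == y j)%:R) * p i (x i) (y i)
     / \prod_(j < n | (i < j)%N) #|X j|%:R.

End Defs.

(* Main.v *)
Require Import Defs.
From HB Require Import structures.
From mathcomp Require Import all_boot all_order all_algebra ring.
Set Implicit Arguments. Unset Strict Implicit. Unset Printing Implicit Defensive.
Import Order.TTheory GRing.Theory Num.Theory.
Local Open Scope ring_scope.

Section S.
Variable R : realFieldType.


Lemma sum_prod_dffun (I : finType) (T_ : I -> finType) (h : forall i, T_ i -> R) :
  \sum_(t : {dffun forall i, T_ i}) \prod_i h i (t i) = \prod_i \sum_(x : T_ i) h i x.
Proof.
pose P_ i := [ffun x : T_ i => h i x].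
transitivity (\sum_(t : fprod T_) \prod_(i in I) P_ i (t i)).
  rewrite (reindex (@dffun_of_fprod I T_)); last first.
    by apply: onW_bij; apply: dffun_of_fprod_bij.
  apply: eq_bigr => t _; apply: eq_bigr => i _.
  by rewrite ffunE /dffun_of_fprod ffunE.
rewrite big_fprod.
under [RHS]eq_bigr => i _ do rewrite (big_tag (fun i x => h i x)).
rewrite bigA_distr_big_dep.
apply: eq_bigr => g _; apply: eq_bigr => i _.
rewrite /untag; case: (g i) => j t /=. case: eqP => // e. by rewrite ffunE.
Qed.


Lemma kop_is_linear (X : finType) (p : X -> X -> R) : linear (@kop R X p).
Proof.
move=> a f g; apply/ffunP => x; rewrite !ffunE /= scaler_sumr -big_split /=.
by apply: eq_bigr => y _; rewrite !ffunE mulrDr mulrCA.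
Qed.

HB.instance Definition _ (X : finType) (p : X -> X -> R) :=
  GRing.isLinear.Build R (L R X) (L R X) _ (@kop R X p) (kop_is_linear p).

Lemma kopEE (X : finType) (p : X -> X -> R) f : kopE p f = kop p f.
Proof. by rewrite /kopE lfunE. Qed.

Lemma eigspP (X : finType) (p : X -> X -> R) a f :
  (f \in eigsp p a) = (kop p f == a *: f).
Proof.
rewrite /eigsp /passmx.leigenspace memv_ker add_lfunE opp_lfunE scale_lfunE id_lfunE kopEE.
by rewrite subr_eq0.
Qed.

Lemma dimL (X : finType) : \dim {: L R X} = #|X|.
Proof. by rewrite dimvf /dim /= muln1. Qed.

Lemma exmax (X : finType) (f : X -> R) (x : X) : exists x0, forall y, f y <= f x0.
Proof.
case: (@Order.TotalTheory.arg_maxP _ R X x xpredT f isT) => i _ H.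
by exists i => y; apply: H.
Qed.

Lemma harm_step (X : finType) (p : X -> X -> R) (f : X -> R) M z w :
  stochastic p -> (forall y, f y <= M) -> \sum_y p z y * f y = f z ->
  f z = M -> 0 < p z w -> f w = M.
Proof.
move=> [p0 p1] fM hz fzM pzw.
have H : \sum_y p z y * (M - f y) = 0.
  under eq_bigr do rewrite mulrBr.
  by rewrite sumrB -big_distrl /= p1 mul1r hz fzM subrr.
have /psumr_eq0P H2 : \sum_(y | true) p z y * (M - f y) = 0 by [].
have /eqP : p z w * (M - f w) = 0.
  apply: H2 => // y _; apply: mulr_ge0 => //; by rewrite subr_ge0.
by rewrite mulf_eq0 gt_eqF //= subr_eq0 => /eqP <-.
Qed.

Lemma harmonic_const (X : finType) (p : X -> X -> R) (f : L R X) :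
  stochastic p -> irreducible p -> f \in eigsp p 1 -> forall x y, f x = f y.
Proof.
move=> sp ip; rewrite eigspP scale1r => /eqP hf x y.
have hz z : \sum_y p z y * f y = f z by rewrite -{2}hf ffunE.
have [x0 Hx0] := exmax f x.
have key u : f u = f x0.
  have /connectP [pa Hpa ->] := ip x0 u.
  elim: pa x0 Hx0 {hf} Hpa => [|a pa IH] x1 Hx1 //= /andP [h1 h2].
  have fa : f a = f x1 by apply: (harm_step sp Hx1 (hz x1)).
  by rewrite (IH a) //= => v; rewrite fa.
by rewrite !key.
Qed.

Lemma eig_indep (X I : finType) (p : X -> X -> R) (a : I -> R) :
  injective a -> forall (S : {set I}) (us : I -> L R X),
  (forall i, i \in S -> kop p (us i) = a i *: us i) ->
  \sum_(i in S) us i = 0 -> forall i, i \in S -> us i = 0.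
Proof.
move=> ia S; have [m] := ubnP #|S|; elim: m S => // m IH S.
move=> ltS us hus hsum i iS.
pose S' := S :\ i.
have hsum' : \sum_(k in S') (a k - a i) *: us k = 0.
  have e1 : \sum_(k in S) (a k - a i) *: us k = 0.
    under eq_bigr do rewrite scalerBl.
    rewrite sumrB -scaler_sumr hsum scaler0 subr0.
    transitivity (kop p (\sum_(k in S) us k)); last by rewrite hsum linear0.
    by rewrite linear_sum; apply: eq_bigr => k kS; rewrite -[RHS]/(kop p (us k)) hus.
  by rewrite (big_setD1 i) //= subrr scale0r add0r in e1.
have cS' : (#|S'| < m)%N.
  by rewrite /S' (cardsD1 i S) iS add1n ltnS in ltS.
have H' := IH S' cS' (fun k => (a k - a i) *: us k).
have z k : k \in S' -> us k = 0.
  move=> kS'.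
  have hv : forall k0, k0 \in S' -> kop p ((a k0 - a i) *: us k0) = a k0 *: ((a k0 - a i) *: us k0).
    move=> k0 k0S'; rewrite linearZ /= hus; first by rewrite scalerA mulrC -scalerA.
    by move: k0S'; rewrite in_setD1 => /andP [].
  have /eqP := H' hv hsum' k kS'.
  rewrite scaler_eq0 subr_eq0 (inj_eq ia).
  by move: kS'; rewrite in_setD1 => /andP [/negPf -> _] /= /eqP.
move: hsum; rewrite (big_setD1 i) //= big1 ?addr0 //.
Qed.

Lemma eig_direct (X : finType) (K : nat) (p : X -> X -> R) (a : 'I_K -> R) :
  injective a -> directv (\sum_(k < K) eigsp p (a k)).
Proof.
move=> ia; apply/directv_sum_independent => us hus hs i _.
apply: (@eig_indep X _ p a ia [set: 'I_K] us) => //.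
  by move=> k _; apply/eqP; rewrite -eigspP; apply: hus.
by under eq_bigl do rewrite inE.
Qed.
End S.
Section T.
Variable R : realFieldType.
Variables (n : nat) (X : 'I_n -> finType).

Lemma tens_in_tensv (V : forall i, {vspace L R (X i)}) (g : forall i, L R (X i)) :
  (forall i, g i \in V i) -> tens g \in tensv V.
Proof.
move=> gV.
pose c i (t : 'I_(\dim (V i))) := coord (vbasis (V i)) t (g i).
pose b i (t : 'I_(\dim (V i))) := tnth (vbasis (V i)) t.
have -> : tens g = \sum_(s : {dffun forall i : 'I_n, 'I_(\dim (V i))})
     (\prod_i c i (s i)) *: tens (fun i => b i (s i)).
  apply/ffunP => x; rewrite ffunE sum_ffunE.
  transitivity (\prod_i \sum_(t : 'I_(\dim (V i))) c i t * b i t (x i)).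
    apply: eq_bigr => i _; rewrite {1}(coord_vbasis (gV i)) sum_ffunE.
    by apply: eq_bigr => t _; rewrite /b (tnth_nth 0) !ffunE.
  rewrite -(sum_prod_dffun (fun i t => c i t * b i t (x i))).
  apply: eq_bigr => s _; rewrite ffunE ffunE big_split /=. done.
apply: rpred_sum => s _; apply: rpredZ; apply: memv_span.
by apply/mapP; exists s => //; rewrite mem_enum.
Qed.

Lemma tens_sum_coord (g : forall i, L R (X i)) J (K : nat) (w : 'I_K -> L R (X J)) :
  g J = \sum_k w k -> tens g = \sum_k tens (dfwith g (w k)).
Proof.
move=> hg; apply/ffunP => x; rewrite ffunE sum_ffunE [in LHS](bigD1 J) //= hg sum_ffunE big_distrl /=.
apply: eq_bigr => k _; rewrite ffunE [in RHS](bigD1 J) //= dfwith_in; congr (_ * _).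
by apply: eq_bigr => i iJ; rewrite dfwith_out // eq_sym.
Qed.

Lemma dim_tensv_le (V : forall i, {vspace L R (X i)}) :
  (\dim (tensv V) <= \prod_i \dim (V i))%N.
Proof.
apply: leq_trans (dim_span _) _; rewrite size_map -cardE card_dep_ffun foldrE big_image /=.
by rewrite leq_eqVlt; apply/orP; left; apply/eqP; apply: eq_bigr => i _; rewrite card_ord.
Qed.
End T.

Section SE.
Local Open Scope nat_scope.
Lemma big_ltS (n J : nat) (hJ : (J < n)%N) (F : 'I_n -> nat) (op : Monoid.com_law 0%N) :
  \big[op/0%N]_(j : 'I_n | (j < J.+1)%N) F j =
  op (F (Ordinal hJ)) (\big[op/0%N]_(j : 'I_n | (j < J)%N) F j).
Proof.
rewrite (bigD1 (Ordinal hJ)) //=; congr (op _ _); apply: eq_bigl => j.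
rewrite ltnS leq_eqVlt; case: (ltnP j J) => h; rewrite ?orbT ?orbF.
  by apply/negP => /eqP e; move: h; rewrite e /= ltnn.
apply/andP; case => /eqP e1 /eqP e2; apply: e2; apply: val_inj; exact: e1.
Qed.

Lemma big_ltS_prod (n J : nat) (hJ : (J < n)%N) (F : 'I_n -> nat) :
  \prod_(j : 'I_n | (j < J.+1)%N) F j = F (Ordinal hJ) * \prod_(j : 'I_n | (j < J)%N) F j.
Proof.
rewrite (bigD1 (Ordinal hJ)) //=; congr (_ * _); apply: eq_bigl => j.
rewrite ltnS leq_eqVlt; case: (ltnP j J) => h; rewrite ?orbT ?orbF.
  by apply/negP => /eqP e; move: h; rewrite e /= ltnn.
apply/andP; case => /eqP e1 /eqP e2; apply: e2; apply: val_inj; exact: e1.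
Qed.

Lemma telesc n (m : 'I_n -> nat) : (forall i, 0 < m i)%N -> forall J, (J <= n)%N ->
  (\sum_(j : 'I_n | (j < J)%N) (\prod_(i : 'I_n | (i < j)%N) m i) *
     (if j == 0 :> nat then m j else m j - 1) + (J == 0))%N =
  \prod_(i : 'I_n | (i < J)%N) m i.
Proof.
move=> mpos; elim => [_|J IH hJ].
  by rewrite !big_pred0 // => i; rewrite ltn0.
rewrite (big_ltS hJ) big_ltS_prod /= addn0.
case: J IH hJ => [|J] IH hJ.
  by rewrite !big_pred0 => [|i|i]; rewrite ?ltn0 //= ?mul1n ?muln1 ?addn0.
move: (IH (ltnW hJ)); rewrite /= addn0 => ->.
have := mpos (Ordinal hJ); case: (m (Ordinal hJ)) => // a _.
by rewrite subSS subn0 mulnC [RHS]mulSn addnC.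
Qed.

End SE.
Unset Implicit Arguments.
Section SB.
Variable R : realFieldType.
Variables (n : nat) (X : 'I_n -> finType).
Variables (p0 : 'I_n -> R) (p : forall i, X i -> X i -> R).

Definition Mi (i : 'I_n) : R := \prod_(j < n | (i < j)%N) #|X j|%:R.

Lemma sum_delta (T : finType) (a : T) (f : T -> R) :
  \sum_t (a == t)%:R * f t = f a.
Proof.
rewrite (bigD1 a) //= eqxx mul1r big1 ?addr0 // => t ta.
by rewrite eq_sym (negPf ta) mul0r.
Qed.

Lemma kop_nested_tens (g : forall i, L R (X i)) (x : prodX X) :
  kop (nested_kernel p0 p) (tens g) x =
  \sum_i p0 i / Mi i * \prod_(j < n) (if (j < i)%N then g j (x j)
       else if j == i then kop (p j) (g j) (x j) else \sum_t g j t).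
Proof.
rewrite ffunE.
pose H (i j : 'I_n) (t : X j) := (if (j < i)%N then (x j == t)%:R else 1) *
   (if j == i then p j (x j) t else 1) * g j t.
transitivity (\sum_i p0 i / Mi i * \sum_(y : prodX X) \prod_j H i j (y j)).
  under eq_bigr => y _ do rewrite /nested_kernel big_distrl /=.
  rewrite exchange_big /=; apply: eq_bigr => i _.
  rewrite big_distrr /=; apply: eq_bigr => y _.
  rewrite ffunE /H !big_split /= -!big_mkcond /= (big_pred1_eq _ i) /Mi.
  ring.
apply: eq_bigr => i _; congr (_ * _).
rewrite (sum_prod_dffun (fun j => H i j)); apply: eq_bigr => j _.
rewrite /H; case: ltnP => ji.
  rewrite (_ : (j == i) = false); last by apply/negbTE; rewrite neq_ltn ji.
  by under eq_bigr do rewrite mulr1; rewrite sum_delta.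
case: eqP => [ji'|ji'].
  by rewrite ffunE; apply: eq_bigr => t _; rewrite mul1r.
by apply: eq_bigr => t _; rewrite !mul1r.
Qed.
End SB.

Lemma sum_eig0 (R : realFieldType) (X : finType) (q : X -> X -> R) a (f : L R X) :
  stochastic q -> symmetric_kernel q -> a != 1 -> f \in eigsp q a -> \sum_t f t = 0.
Proof.
move=> [_ q1] qs a1; rewrite eigspP => /eqP hf.
have : a * \sum_t f t = \sum_t f t.
  rewrite mulr_sumr; transitivity (\sum_x kop q f x).
    by apply: eq_bigr => x _; rewrite hf ffunE.
  under eq_bigr do rewrite ffunE.
  rewrite exchange_big /=; apply: eq_bigr => y _.
  by rewrite -big_distrl /= (eq_bigr (fun x => q y x)) ?q1 ?mul1r // => x _; rewrite qs.
move/eqP; rewrite -subr_eq0 -{2}(mul1r (\sum_t f t)) -mulrBl mulf_eq0 subr_eq0 (negPf a1) /=.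
by move/eqP.
Qed.

Lemma prod_e (R : realFieldType) (n : nat) (X : 'I_n -> finType) (i : 'I_n) (c : R) :
  \prod_(j < n) (if (j < i)%N then 1 else if j == i then c else (#|X j|%:R : R)) =
  c * Mi _ _ X i.
Proof.
rewrite (bigD1 i) //= ltnn eqxx; congr (_ * _).
rewrite /Mi [RHS]big_mkcond /= [RHS](bigD1 i) //= ltnn mul1r; apply: eq_bigr => j ji.
rewrite (negPf ji); case: ltngtP => //.
by move=> e; move: ji; rewrite (val_inj e) eqxx.
Qed.

Lemma eig_tens (R : realFieldType) (n : nat) (X : 'I_n -> finType)
  (p0 : 'I_n -> R) (p : forall i, X i -> X i -> R)
  (g : forall i, L R (X i)) (j0 : 'I_n) (lam : R) :
  (forall i, stochastic (p i)) -> (forall i, irreducible (p i)) ->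
  (forall j, 0 < #|X j|)%N ->
  g j0 \in eigsp (p j0) lam ->
  ((0 < j0)%N -> \sum_t g j0 t = 0) ->
  (forall i : 'I_n, (j0 < i)%N -> g i \in eigsp (p i) 1) ->
  kop (nested_kernel p0 p) (tens g) =
    (p0 j0 * lam + \sum_(i < n | (j0 < i)%N) p0 i) *: tens g.
Proof.
move=> st irr ne gj0 sj0 gi.
apply/ffunP => x; rewrite kop_nested_tens ffunE.
set T := tens g x.
have MiN (i : 'I_n) : Mi _ _ X i != 0.
  by rewrite /Mi; apply/prodf_neq0 => j _; rewrite pnatr_eq0 -lt0n ne.
have cst (j : 'I_n) : (j0 < j)%N -> \sum_t g j t = #|X j|%:R * g j (x j).
  move=> jj; rewrite mulr_natl -sumr_const; apply: eq_bigr => t _.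
  exact: (harmonic_const (st j) (irr j) (gi j jj)).
have F (i : 'I_n) : p0 i / Mi _ _ X i * \prod_(j < n) (if (j < i)%N then g j (x j)
       else if j == i then kop (p j) (g j) (x j) else \sum_t g j t) =
     ((i == j0)%:R * (p0 j0 * lam) + (j0 < i)%:R * p0 i) * T.
  case: (ltnP i j0) => ij.
    rewrite (bigD1 j0) //= (ltnNge j0 i) (ltnW ij) /=.
    rewrite (_ : (j0 == i) = false); last by apply/negbTE; rewrite neq_ltn ij orbT.
    rewrite sj0; last by apply: leq_ltn_trans ij.
    rewrite (_ : (i == j0) = false); last by apply/negbTE; rewrite neq_ltn ij.
    by rewrite !mul0r mulr0 add0r mul0r.
  pose c := if i == j0 then lam else 1.
  transitivity (p0 i / Mi _ _ X i * \prod_(j < n) ((if (j < i)%N then 1 else if j == i then c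
        else (#|X j|%:R : R)) * g j (x j))).
    congr (_ * _); apply: eq_bigr => j _.
    case: ltnP => ji; first by rewrite mul1r.
    case: eqP => [eji | nji].
      rewrite /c; subst j.
      case: eqP => [ei | nei].
        by move: gj0; rewrite -ei eigspP => /eqP ->; rewrite ffunE.
      have ji0 : (j0 < i)%N by rewrite ltn_neqAle ij andbT; apply/eqP => e; apply: nei; apply: val_inj.
      by move: (gi i ji0); rewrite eigspP scale1r => /eqP ->; rewrite mul1r.
    apply: cst; apply: leq_ltn_trans ij _; rewrite ltn_neqAle ji andbT.
    by apply/eqP => e; apply: nji; apply: val_inj.
  rewrite big_split /= prod_e -/T /c.
  case: eqP => [ei | nei].
    rewrite /T ffunE ei ltnn /= mul0r addr0 mul1r.
    by field; apply: MiN.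
  have ji0 : (j0 < i)%N by rewrite ltn_neqAle ij andbT; apply/eqP => e; apply: nei; apply: val_inj.
  rewrite /T ffunE ji0 /= mul0r add0r mul1r.
  by field; apply: MiN.
rewrite (eq_bigr _ (fun i _ => F i)) -big_distrl /= big_split /=; congr (_ * _); congr (_ + _).
  by rewrite (bigD1 j0) //= eqxx mul1r big1 ?addr0 // => i ij; rewrite (negPf ij) mul0r.
by rewrite [RHS]big_mkcond /=; apply: eq_bigr => i _; case: ltnP => _; rewrite ?mul1r ?mul0r.
Qed.

Lemma natfact (a b c : nat) : a = 1%N -> c = b -> c = (a + b - 1)%N.
Proof. by move=> -> ->; rewrite add1n subSS subn0. Qed.

Theorem proposition6p1 (R : realFieldType) (n : nat) (X : 'I_n -> finType)
    (p : forall i : 'I_n, X i -> X i -> R) (p0 : 'I_n -> R)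
    (r : 'I_n -> nat) (lam : forall i : 'I_n, 'I_(r i).+1 -> R) :
  (2 <= n)%N ->
  (forall i, stochastic (p i)) ->
  (forall i, irreducible (p i)) ->
  (forall i, reversible_pos (p i)) ->
  (forall i : 'I_n, (0 < i)%N -> symmetric_kernel (p i)) ->
  (forall i, 0 < p0 i) -> \sum_i p0 i = 1 ->
  (* L(X_i) = (+)_{k=0}^{r_i} W^i_k is the eigenspace decomposition of P_i:
     the lam i k are pairwise distinct eigenvalues, lam i 0 = 1, and the
     eigenspaces W^i_k = eigsp (p i) (lam i k) span L(X_i) *)
  (forall i, injective (lam i)) ->
  (forall i, lam i ord0 = 1) ->
  (forall i k, eigsp (p i) (lam i k) != 0%VS) ->
  (forall i, (\sum_(k < (r i).+1) eigsp (p i) (lam i k))%VS = fullv) ->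
  let W i k := eigsp (p i) (lam i k) in
  let ok (s : {j : 'I_n & 'I_(r j).+1}) := (tag s == 0 :> nat) || (tagged s != ord0) in
  let block (s : {j : 'I_n & 'I_(r j).+1}) :=
    tensv (fun i : 'I_n =>
      if (i < tag s)%N then fullv
      else if (i == tag s :> nat) then eigsp (p i) (lam i (inord (tagged s)))
      else W i ord0) in
  let mu (s : {j : 'I_n & 'I_(r j).+1}) :=
    p0 (tag s) * lam (tag s) (tagged s) + \sum_(i < n | (tag s < i)%N) p0 i in
  let PP := kop (nested_kernel p0 p) in
  (forall s, ok s -> forall f, f \in block s -> PP f = mu s *: f) /\
  (forall s, ok s ->
     \dim (block s) = ((\prod_(i < n | (i < tag s)%N) #|X i|) * \dim (W (tag s) (tagged s)))%N) /\
  directv (\sum_(s | ok s) block s) /\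
  (\sum_(s | ok s) block s)%VS = fullv.
Proof.
move=> n2 hst hirr hrev hsym hp0 hsum1 hinj hlam0 hnz hfull W ok block mu PP.
have ne i : (0 < #|X i|)%N.
  rewrite lt0n; apply/negP => /eqP e; move: (hnz i ord0); apply/negP; rewrite negbK.
  by rewrite -dimv_eq0 -leqn0 -e -(dimL R (X i)) dimvS // subvf.
have W0 i : W i ord0 = eigsp (p i) 1 by rewrite /W hlam0.
have dimW0 i : \dim (W i ord0) = 1%N :> nat.
  have [x0 _] := card_gt0P (ne i).
  pose one : L R (X i) := [ffun _ => 1].
  have sub : (W i ord0 <= <[one]>)%VS.
    apply/subvP => f; rewrite W0 => hf.
    have -> : f = f x0 *: one.
      apply/ffunP => y; rewrite !ffunE -[_ *: _]/(f x0 * 1) mulr1.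
      exact: (harmonic_const (hst i) (hirr i) hf y x0).
    by rewrite memvZ // memv_line.
  apply/eqP; rewrite eqn_leq; apply/andP; split.
    by apply: leq_trans (dimvS sub) _; rewrite dim_vline leq_b1.
  by rewrite lt0n dimv_eq0 hnz.
have dimsum i : (\sum_(k < (r i).+1) \dim (W i k))%N = #|X i|.
  have /directvP dd := eig_direct (p i) (hinj i).
  by rewrite -(dimL R (X i)) -(hfull i) dd.
have eig s : ok s -> forall f, f \in block s -> PP f = mu s *: f.
  move=> oks f hf.
  have sub : (block s <= eigsp (nested_kernel p0 p) (mu s))%VS.
    apply/span_subvP => v /mapP [t _ ->].
    pose Vf := fun i : 'I_n => if (i < tag s)%N then fullv else if i == tag s :> nat
       then eigsp (p i) (lam i (inord (tagged s))) else W i ord0.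
    pose g := fun i => tnth (vbasis (Vf i)) (t i).
    have gV i : g i \in Vf i by apply: vbasis_mem; apply: mem_tnth.
    have gj0 : g (tag s) \in eigsp (p (tag s)) (lam (tag s) (tagged s)).
      by move: (gV (tag s)); rewrite /Vf ltnn eqxx inord_val.
    rewrite eigspP; apply/eqP; apply: (@eig_tens R n X p0 p g (tag s)) => //.
      move=> j0pos; apply: (sum_eig0 _ _ _ _ _ (hst _) (hsym _ j0pos) _ gj0).
      rewrite -(hlam0 (tag s)) (inj_eq (hinj _)).
      by move: oks; rewrite /ok (_ : (tag s == 0 :> nat) = false) //; apply/negbTE; rewrite -lt0n.
    move=> i ji; move: (gV i); rewrite /Vf ltnNge (ltnW ji) /=.
    by rewrite (_ : (i == tag s :> nat) = false) ?W0 // gtn_eqF.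
  by move/subvP: sub => /(_ f hf); rewrite eigspP => /eqP.
set Sum := (\sum_(s | ok s) block s)%VS.
have inSum s f : ok s -> f \in block s -> f \in Sum.
  by move=> oks hf; apply: (subvP (sumv_sup s oks (subvv _))).
have n0 : (0 < n)%N by apply: ltnW.
pose j00 : 'I_n := Ordinal n0.
have span_all J : (J <= n)%N -> forall g : forall i, L R (X i),
    (forall i : 'I_n, (J <= i)%N -> g i \in eigsp (p i) 1) -> tens g \in Sum.
  elim: J => [|J IH] hJ g hg.
    pose s0 := existT (fun j => 'I_(r j).+1) j00 ord0.
    apply: (inSum s0) => //; apply: tens_in_tensv => i.
    rewrite ltn0 /=; case: ifP => e.
      have -> : (inord 0 : 'I_(r i).+1) = ord0 by apply: val_inj; rewrite /= inordK.
      by rewrite hlam0; apply: hg.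
    by rewrite W0; apply: hg.
  pose jJ : 'I_n := Ordinal hJ.
  have : g jJ \in fullv by apply: memvf.
  rewrite -(hfull jJ) => /memv_sumP [w hw e].
  rewrite (tens_sum_coord e); apply: rpred_sum => k _.
  case k0 : (k == ord0).
    move/eqP: k0 => k0.
    apply: IH; first exact: ltnW.
    move=> i Ji; have [<-|ni] := eqVneq jJ i.
      by rewrite dfwith_in; move: (hw k isT); rewrite k0 hlam0.
    rewrite dfwith_out //; apply: hg; rewrite ltn_neqAle Ji andbT.
    by apply/negP => /eqP e'; move/negP: ni; apply; apply/eqP; apply: val_inj.
  pose s := existT (fun j => 'I_(r j).+1) jJ k.
  apply: (inSum s); first by rewrite /ok /= k0 orbT.
  apply: tens_in_tensv => i; have [<-|ni] := eqVneq jJ i.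
    by rewrite dfwith_in /= ltnn eqxx inord_val; apply: hw.
  rewrite dfwith_out //.
  rewrite /=; case: ltnP => li; first exact: memvf.
  have Ji : (J < i)%N.
    rewrite ltn_neqAle li andbT.
    by apply/negP => /eqP e'; move/negP: ni; apply; apply/eqP; apply: val_inj.
  by rewrite gtn_eqF // W0; apply: hg.
have Sumfull : Sum = fullv.
  apply/eqP; rewrite eqEsubv subvf /=; apply/subvP => f _.
  have dprod (x y : prodX X) : \prod_i (((x i == y i)%:R) : R) = (x == y)%:R.
    have [<-|nxy] := eqVneq x y; first by apply: big1 => i _; rewrite eqxx.
    case: (pickP (fun i => x i != y i)) => [i xi | H].
      by rewrite (bigD1 i) //= (negPf xi) mul0r.
    case/negP: nxy; apply/eqP/ffunP => i; apply/eqP.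
    by move: (H i) => /= /negbFE.
  have -> : f = \sum_(x : prodX X) f x *: tens (fun i => [ffun t => ((x i == t)%:R : R)]).
    apply/ffunP => y; rewrite sum_ffunE.
    transitivity (\sum_(x : prodX X) (x == y)%:R * f x).
      by rewrite (bigD1 y) //= eqxx mul1r big1 ?addr0 // => x /negPf ->; rewrite mul0r.
    apply: eq_bigr => x _; rewrite !ffunE -[_ *: _]/(f x * _) mulrC; congr (_ * _).
    by rewrite -dprod; apply: eq_bigr => i _; rewrite ffunE.
  apply: rpred_sum => x _; apply: rpredZ; apply: (span_all n (leqnn n)) => i.
  by rewrite leqNgt ltn_ord.
pose bnd (s : {j : 'I_n & 'I_(r j).+1}) :=
  ((\prod_(i < n | (i < tag s)%N) #|X i|) * \dim (W (tag s) (tagged s)))%N.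
have ub s : (\dim (block s) <= bnd s)%N.
  apply: leq_trans (dim_tensv_le _) _.
  rewrite (bigD1 (tag s)) //= ltnn eqxx inord_val mulnC leq_eqVlt; apply/orP; left.
  apply/eqP; congr (_ * _)%N; rewrite [RHS]big_mkcond /= [RHS](bigD1 (tag s)) //= ltnn mul1n.
  apply: eq_bigr => i ni; case: ltnP => li; first by rewrite dimL.
  rewrite (_ : (i == tag s :> nat) = false) ?dimW0 //.
  by apply/negbTE; move: ni; apply: contra => /eqP e; apply/eqP; apply: val_inj.
have total : (\sum_(s | ok s) bnd s)%N = \prod_i #|X i|.
  transitivity (\sum_(j : 'I_n) \sum_(k : 'I_(r j).+1 | (j == 0 :> nat) || (k != ord0))
      ((\prod_(i < n | (i < j)%N) #|X i|) * \dim (W j k)))%N.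
    by rewrite (sig_big_dep xpredT (fun j (k : 'I_(r j).+1) => (j == 0 :> nat) || (k != ord0))
      (fun j (k : 'I_(r j).+1) => ((\prod_(i < n | (i < j)%N) #|X i|) * \dim (W j k))%N)).
  transitivity (\sum_(j : 'I_n | (j < n)%N) (\prod_(i : 'I_n | (i < j)%N) #|X i|) *
     (if j == 0 :> nat then #|X j| else #|X j| - 1) + (n == 0))%N.
    rewrite (_ : (n == 0) = false) ?addn0; last by apply/negbTE; rewrite -lt0n.
    rewrite [RHS](eq_bigl xpredT); last by move=> j; exact: ltn_ord.
    apply: eq_bigr => j _; rewrite -big_distrr /=; congr muln.
    case: eqP => j0.
      by rewrite -(dimsum j); apply: eq_bigl => k.
    have e1 : (\sum_(k < (r j).+1) \dim (W j k) =
        1 + \sum_(k < (r j).+1 | true && (k != ord0)) \dim (W j k))%N.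
      exact: (etrans (bigD1 ord0 isT) (f_equal2 addn (dimW0 j) erefl)).
    rewrite -(dimsum j) e1.
    rewrite add1n subSS subn0.
    by apply: eq_bigl => k.
  rewrite (@telesc n (fun i => #|X i|) ne n (leqnn n)).
  by apply: eq_bigl => i; rewrite ltn_ord.
have dimfull : \dim (fullv : {vspace L R (prodX X)}) = \prod_i #|X i| :> nat.
  by rewrite dimL card_dep_ffun foldrE big_image.
have h1 : (\dim Sum <= \sum_(s | ok s) \dim (block s))%N by apply: dimv_leq_sum.
have h2 : (\sum_(s | ok s) \dim (block s) <= \sum_(s | ok s) bnd s)%N.
  by apply: leq_sum => s _; apply: ub.
have eqDB : (\sum_(s | ok s) \dim (block s) = \sum_(s | ok s) bnd s)%N.
  apply/eqP; rewrite eqn_leq h2 /=; rewrite total -dimfull -Sumfull; exact: h1.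
have eqD : (\sum_(s | ok s) \dim (block s) = \dim Sum)%N.
  by rewrite eqDB total -dimfull -Sumfull.
have hl := @leqif_sum _ ok _ _ _ (fun s _ => leqif_eq (ub s)).
case: hl => _ heq.
have /forall_inP hall : [forall (s | ok s), \dim (block s) == bnd s].
  by rewrite -heq eqDB.
split; first exact: eig.
split; first by move=> s oks; apply/eqP; apply: hall.
split; last exact: Sumfull.
rewrite /Sum directvEgeq /= -/Sum -eqD.
exact: leqnn.
Qed.
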